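(* Fix $n\in\mathbb N$ and let $H_0$ be a finite weakly $n$-saturated graph with vertex set $V(H_0)=\{1,2,\dots,k\}$ for some $k\ge n$. For $m\in\mathbb N$ let $H_m$ be the random graph with vertex set $\{1,\dots,k\}\times\{0,1,\dots,m\}$ whose edge relation is determined as follows: (i) for all $i<j\le k$, $(i,0)$ and $(j,0)$ are adjacent in $H_m$ if and only if $i$ and $j$ are adjacent in $H_0$; (ii) for all $i,j\le k$, if $i$ and $j$ are not adjacent in $H_0$, then $(i,s)$ and $(j,t)$ are not adjacent for any $s,t\le m$; (iii) if $i$ and $j$ are adjacent in $H_0$ and $s,t\le m$ with at least one of $s,t$ positive, then $(i,s)$ and $(j,t)$ are adjacent in $H_m$ with probability $1/2$, each such decision made independently of all others; (iv) $H_m$ is reflexive (and the edge relation is symmetric). Then there is $m\in\mathbb N$ such that (A) the probability that $H_m$ is $n$-saturated is positive; and (B) the probability of the following event $\mathcal X$ is positive: for every $p<n$, every $i_1,\dots,i_p,i\in V(H_0)$ such that $i_1,\dots,i_p$ are each adjacent to $i$ in $H_0$, and every $j_1,\dots,j_p\in\{0,1,\dots,m\}$, there is $l\in\{0,1,\dots,m\}$ such that $(i_1,j_1),\dots,(i_p,j_p)$ are all adjacent to $(i,l)$ in $H_m$.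
   Context: A graph is a pair $G=(V(G),E(G))$ where $V(G)$ is a non-empty set and $E(G)$ is a symmetric and reflexive relation on $V(G)$. For $A\subseteq V(G)$, a type over $A$ is a function $f\colon A\to\{0,1\}$; a vertex $v\in V(G)\setminus A$ realizes $f$ if for every $a\in A$, $(a,v)\in E(G)$ iff $f(a)=1$. $G$ is $n$-saturated if for every $A\subseteq V(G)$ with $|A|<n$ and every type $f\in\{0,1\}^A$ some vertex $x\in V(G)\setminus A$ realizes $f$. $G$ is weakly $n$-saturated if for every $A\subseteq V(G)$ with $|A|<n$ there is $x\in V(G)$ adjacent to every $a\in A$. *)

(* Defs.v *)
From mathcomp Require Import all_boot all_order all_algebra.
Set Implicit Arguments. Unset Strict Implicit. Unset Printing Implicit Defensive.
Import GRing.Theory Num.Theory.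

Definition is_graph (T : finType) (e : rel T) : Prop := reflexive e /\ symmetric e.

Definition weakly_saturated (T : finType) (e : rel T) (n : nat) : Prop :=
  forall A : {set T}, #|A| < n -> exists x : T, forall a, a \in A -> e a x.

(* n-saturated (boolean): every type f over A (|A| < n) is realized by some x
   outside A.  A type over A is given by a function T -> bool, only its values
   on A matter. *)
Definition saturatedb (T : finType) (e : rel T) (n : nat) : bool :=
  [forall A : {set T}, (#|A| < n) ==>
     [forall f : {ffun T -> bool},
        [exists x, (x \notin A) && [forall a in A, e a x == f a]]]].

Definition vert (k m : nat) := ('I_k * 'I_m.+1)%type.

(* Sample space: a fair coin for every ordered pair of vertices; the edge
   between x <> y uses the coin of the pair ordered by enum_rank, so each
   random unordered pair gets an independent fair coin. *)
Definition Omega (k m : nat) := {ffun (vert k m * vert k m) -> bool}.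

Definition Hm_edge (k : nat) (E0 : rel 'I_k) (m : nat) (w : Omega k m)
  : rel (vert k m) := fun x y =>
  if x == y then true
  else if ~~ E0 x.1 y.1 then false
  else if (x.2 == ord0) && (y.2 == ord0) then true
  else if enum_rank x < enum_rank y then w (x, y) else w (y, x).

Definition prob (k m : nat) (ev : pred (Omega k m)) : rat :=
  (#|[set w | ev w]|%:R / #|{: Omega k m}|%:R)%R.

Definition event_sat (k : nat) (E0 : rel 'I_k) (m n : nat) : pred (Omega k m) :=
  fun w => saturatedb (Hm_edge E0 w) n.

Definition event_X (k : nat) (E0 : rel 'I_k) (m n : nat) : pred (Omega k m) :=
  fun w =>
  [forall p : 'I_n, [forall is_ : {ffun 'I_p -> 'I_k}, [forall i : 'I_k,
    [forall js : {ffun 'I_p -> 'I_m.+1},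
      [forall q, E0 (is_ q) i] ==>
      [exists l : 'I_m.+1, [forall q, Hm_edge E0 w (is_ q, js q) (i, l)]]]]]].

Arguments event_sat {k} E0 m n _.
Arguments event_X {k} E0 m n _.
Arguments prob {k m} ev.

(* Main.v *)
Require Import Defs.
From mathcomp Require Import all_boot all_order all_algebra.
From mathcomp Require Import zify.
Import GRing.Theory Num.Theory.
Set Implicit Arguments. Unset Strict Implicit. Unset Printing Implicit Defensive.

Definition flipf (X : finType) (p : X) (w : {ffun X -> bool}) : {ffun X -> bool} :=
  [ffun x => if x == p then ~~ w x else w x].

Lemma flipfK (X : finType) (p : X) : involutive (flipf p).
Proof. by move=> w; apply/ffunP=> x; rewrite !ffunE; case: eqP => //= _; rewrite negbK. Qed.

Lemma flipf_other (X : finType) (p q : X) w : q != p -> flipf p w q = w q.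
Proof. by rewrite ffunE => /negbTE ->. Qed.

Lemma flipf_at (X : finType) (p : X) w : flipf p w p = ~~ w p.
Proof. by rewrite ffunE eqxx. Qed.

Lemma card_flip (X : finType) (p : X) (P P' : pred {ffun X -> bool}) :
  (forall w, P' w = P (flipf p w)) ->
  #|[set w | P' w]| = #|[set w | P w]|.
Proof.
move=> HP.
have inj : injective (flipf p) := inv_inj (flipfK p).
rewrite -(card_imset [set w | P' w] inj); apply: eq_card => w.
rewrite (can2_imset_pre _ (flipfK p) (flipfK p)) !inE HP flipfK //.
Qed.

Lemma card_half (X : finType) (p : X) (P : pred {ffun X -> bool}) (b : bool) :
  (forall w, P (flipf p w) = P w) ->
  #|[set w | P w && (w p == b)]| * 2 = #|[set w | P w]|.
Proof.
move=> HP.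
rewrite -(cardsID [set w : {ffun X -> bool} | w p == b] [set w | P w]).
have -> : [set w | P w] :&: [set w : {ffun X -> bool} | w p == b] = [set w | P w && (w p == b)].
  by apply/setP=> w; rewrite !inE.
have -> : #|[set w | P w] :\: [set w : {ffun X -> bool} | w p == b]| = #|[set w | P w && (w p == b)]|.
  rewrite -(@card_flip _ p (fun w => P w && (w p == b)) (fun w => P (flipf p w) && (flipf p w p == b))) //.
  by apply: eq_card => w; rewrite !inE HP flipf_at andbC; case: (w p); case: b.
by rewrite muln2 addnn.
Qed.

Definition matchb (X : finType) (w : {ffun X -> bool}) (pts : seq (X * bool)) :=
  all (fun pt => w pt.1 == pt.2) pts.

Lemma card_match (X : finType) (pts : seq (X * bool)) (P : pred {ffun X -> bool}) :
  uniq (map fst pts) ->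
  (forall p w, p \in map fst pts -> P (flipf p w) = P w) ->
  2 ^ size pts * #|[set w | P w && matchb w pts]| = #|[set w | P w]|.
Proof.
elim: pts P => [|pt pts IH] P /=.
  move=> _ _; rewrite expn0 mul1n; apply: eq_card => w; by rewrite !inE /matchb /= andbT.
case/andP=> Hpt Hu HP.
have HP' : forall w, (P w && matchb w pts) = (P (flipf pt.1 w) && matchb (flipf pt.1 w) pts).
  move=> w; rewrite HP ?mem_head //; congr andb.
  apply: eq_in_all => q Hq; rewrite flipf_other //.
  by apply: contraNneq Hpt => <-; apply: map_f.
rewrite -(IH P) //; last by move=> p w Hp; apply: HP; rewrite inE Hp orbT.
rewrite -(@card_half _ pt.1 (fun w => P w && matchb w pts) pt.2); last by move=> w /=; rewrite (HP' w).
rewrite expnS -mulnA [_ * 2]mulnC mulnCA; congr (_ * (_ * _)).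
by apply: eq_card => w; rewrite !inE -andbA (andbC (matchb w pts)).
Qed.

Lemma card_blocks (X : finType) (L : eqType) (n : nat) (blk : L -> seq (X * bool)) (ls : seq L) :
  uniq ls ->
  (forall l, l \in ls -> uniq (map fst (blk l)) /\ size (blk l) <= n) ->
  (forall l l', l \in ls -> l' \in ls -> l != l' ->
     forall p, p \in map fst (blk l) -> p \notin map fst (blk l')) ->
  (2 ^ n) ^ size ls * #|[set w | all (fun l => ~~ matchb w (blk l)) ls]|
    <= (2 ^ n - 1) ^ size ls * #|{: {ffun X -> bool}}|.
Proof.
elim: ls => [|l ls IH] /=.
  by move=> _ _ _; rewrite !expn0 !mul1n; apply: subset_leq_card; apply/subsetP.
case/andP=> Hl Hu Hb Hd.
set R := fun w => all (fun l => ~~ matchb w (blk l)) ls.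
have [Hul Hsl] := Hb l (mem_head _ _).
have Hinv : forall p w, p \in map fst (blk l) -> R (flipf p w) = R w.
  move=> p w Hp; apply: eq_in_all => l' Hl'; congr negb.
  apply: eq_in_all => q Hq; rewrite flipf_other //.
  have Hne : l != l' by apply: contraNneq Hl => ->.
  have Hl'' : l' \in l :: ls by rewrite inE Hl' orbT.
  have := Hd l l' (mem_head _ _) Hl'' Hne p Hp.
  by apply: contraNneq => <-; apply: map_f.
have Hc := card_match Hul Hinv.
have sub : forall x, x \in ls -> x \in l :: ls by move=> x Hx; rewrite inE Hx orbT.
have IH' := IH Hu (fun l' Hl' => Hb l' (sub _ Hl'))
  (fun a b Ha Hb' => Hd a b (sub _ Ha) (sub _ Hb')).
rewrite -/R in IH'.
set c := #|[set w | R w]| in Hc IH'.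
set e := #|[set w | R w && matchb w (blk l)]| in Hc.
have Hsplit : #|[set w | ~~ matchb w (blk l) && R w]| = c - e.
  rewrite /c /e -(cardsID [set w : {ffun X -> bool} | matchb w (blk l)] [set w | R w]).
  have -> : [set w | R w] :&: [set w : {ffun X -> bool} | matchb w (blk l)] = [set w | R w && matchb w (blk l)].
    by apply/setP=> w; rewrite !inE.
  rewrite addKn; apply: eq_card => w; rewrite !inE andbC //.
rewrite Hsplit.
have Hce : c <= 2 ^ n * e.
  rewrite -Hc leq_mul2r; apply/orP; right; exact: leq_pexp2l.
have H1 : 2 ^ n * (c - e) <= (2 ^ n - 1) * c.
  by rewrite mulnBr mulnBl mul1n; apply: leq_sub2l.
rewrite !expnS -mulnA (mulnC (2 ^ n)) -mulnA mulnA -mulnA (mulnC (c - e)).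
apply: leq_trans (leq_mul (leqnn _) H1) _.
by rewrite mulnCA -mulnA leq_mul2l IH' orbT.
Qed.

Lemma exp_mono e a b : a <= b -> a ^ e <= b ^ e.
Proof. move=> ab; elim: e => [|e IH]; rewrite ?expn0 // !expnS; exact: leq_mul. Qed.

Lemma sq_le_exp2 s : 4 <= s -> s * s <= 2 ^ s.
Proof.
elim: s => // s IH; rewrite leq_eqVlt => /orP [/eqP <- // | Hs].
have := IH Hs; rewrite expnS; nia.
Qed.

Lemma lin_le_exp2 a b : exists s, a * s + b <= 2 ^ s.
Proof.
exists (a + b + 4); apply: leq_trans (sq_le_exp2 _) ; last by rewrite leq_addl.
nia.
Qed.

Lemma poly_lt_exp2 C n : exists t, C * (t + 1) ^ n < 2 ^ t.
Proof.
have [s Hs] := lin_le_exp2 n (C + 1).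
exists (n * s + C).
have H1 : (n * s + C + 1) ^ n <= 2 ^ (s * n).
  by rewrite expnM; apply: exp_mono; rewrite -addnA.
have H2 : C < 2 ^ C by apply: ltn_expl.
have H3 : 0 < (n * s + C + 1) ^ n by rewrite expn_gt0 addn1.
rewrite expnD (mulnC n).
move: H1 H2 H3; rewrite (mulnC s n).
move: ((n * s + C + 1) ^ n) (2 ^ (n * s)) (2 ^ C) => X Y Z; nia.
Qed.

Lemma binom_low x q : x ^ q.+1 + q.+1 * x ^ q <= (x + 1) ^ q.+1.
Proof.
elim: q => [|q IH]; first by rewrite !expn1 expn0 muln1.
rewrite (expnS (x + 1)).
apply: leq_trans (leq_mul (leqnn (x + 1)) IH).
rewrite !expnS; set y := x ^ q; nia.
Qed.

Lemma two_pow_le Q : 0 < Q -> 2 * (Q - 1) ^ Q <= Q ^ Q.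
Proof.
case: Q => // x _; rewrite subn1 /=.
have H := binom_low x x; rewrite addn1 in H.
rewrite (expnS x x) in H *.
move: H; move: (x ^ x) (x.+1 ^ x.+1) => y z; nia.
Qed.

Lemma arith c a b n Q : 0 < Q -> exists L, c * (a * L + b) ^ n * (Q - 1) ^ L < Q ^ L.
Proof.
case: Q => // -[_|Q _]; first by exists 1; rewrite subnn expn1 muln0 expn1.
set P := Q.+2.
set d := a * P + b.
have [t Ht] := poly_lt_exp2 (c * d ^ n) n.
exists (P * t).
have H1 : (a * (P * t) + b) ^ n <= d ^ n * (t + 1) ^ n.
  rewrite -expnMn; apply: exp_mono; rewrite /d; nia.
have Hpos : 0 < (P - 1) ^ (P * t) by rewrite expn_gt0 /P subn1.
apply: leq_trans (_ : (2 ^ t) * (P - 1) ^ (P * t) <= _).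
  have Hm : c * (a * (P * t) + b) ^ n <= c * d ^ n * (t + 1) ^ n by rewrite -mulnA leq_mul2l H1 orbT.
  move: Hm Ht Hpos; move: (c * (a * (P * t) + b) ^ n) (c * d ^ n * (t + 1) ^ n) (2 ^ t) ((P - 1) ^ (P * t)).
  move=> U V Z W HUV HVZ HW; rewrite ltn_pmul2r //; exact: leq_ltn_trans HUV HVZ.
rewrite !expnM -expnMn; apply: exp_mono; apply: two_pow_le. by [].
Qed.

Definition posv (k m : nat) (x y : vert k m) : vert k m * vert k m :=
  if enum_rank x < enum_rank y then (x, y) else (y, x).

Lemma pos_eq k m (a v a' v' : vert k m) : posv a v = posv a' v' ->
  (a = a' /\ v = v') \/ (a = v' /\ v = a').
Proof. rewrite /posv; do 2 case: ifP => _; case=> ? ?; subst; auto. Qed.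

Definition Ag (T : finType) n (g : {ffun 'I_n -> option T}) : {set T} :=
  [set x | Some x \in codom g].
Definition Bg (T : finType) n (g : {ffun 'I_n -> option T}) (h : {ffun 'I_n -> bool}) : {set T} :=
  [set x | [exists j, (g j == Some x) && h j]].

Lemma card_Ag (T : finType) n (g : {ffun 'I_n -> option T}) : #|Ag g| <= n.
Proof.
have inj : injective (@Some T) by move=> x y [].
rewrite -(card_imset _ inj).
apply: leq_trans (_ : #|codom g| <= n); last by apply: leq_trans (card_size _) _; rewrite size_codom card_ord.
apply: subset_leq_card; apply/subsetP => y /imsetP [x]; rewrite inE => Hx ->; exact Hx.
Qed.

Lemma Ag_surj (T : finType) n (A B : {set T}) : #|A| <= n ->
  exists (g : {ffun 'I_n -> option T}) (h : {ffun 'I_n -> bool}), Ag g = A /\ forall a, a \in A -> (a \in Bg g h) = (a \in B).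
Proof.
move=> HA.
pose s := enum A.
pose g : {ffun 'I_n -> option T} := [ffun j : 'I_n => nth None (map Some s) j].
pose h : {ffun 'I_n -> bool} := [ffun j => if g j is Some x then x \in B else false].
have Hg : forall x, (Some x \in codom g) = (x \in A).
  move=> x; apply/codomP/idP.
  - case=> j; rewrite ffunE.
    case: (ltnP j (size s)) => Hj.
      rewrite (nth_map x) // => -[->]; rewrite -mem_enum; exact: mem_nth.
    by rewrite nth_default // size_map.
  - move=> Hx.
    have Hi : index x s < n by apply: leq_trans _ HA; rewrite cardE index_mem mem_enum.
    exists (Ordinal Hi); rewrite ffunE /= (nth_map x); last by rewrite index_mem mem_enum.
    by rewrite nth_index // mem_enum.
exists g, h; split.
  by apply/setP=> x; rewrite inE Hg.
move=> a Ha; rewrite inE; apply/existsP/idP.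
- by case=> j /andP [/eqP Hj]; rewrite ffunE Hj.
- move=> Hb; have := Ha; rewrite -Hg => /codomP [j Hj].
  by exists j; rewrite -Hj eqxx /= ffunE -Hj.
Qed.

Definition okl k m (w : Omega k m) (i : 'I_k) (A B : {set vert k m}) (l : 'I_m.+1) : bool :=
  (l != ord0) && ((i, l) \notin A) && [forall a in A, w (posv a (i, l)) == (a \in B)].

Lemma count_bad k m n L (i : 'I_k) (A B : {set vert k m}) :
  m = n + L -> #|A| <= n ->
  (2 ^ n) ^ L * #|[set w : Omega k m | ~~ [exists l, okl w i A B l]]|
    <= (2 ^ n - 1) ^ L * #|{: Omega k m}|.
Proof.
move=> Hm HA.
set S := [set l : 'I_m.+1 | (l != ord0) && ((i, l) \notin A)].
have HS : L <= #|S|.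
  set Z := [set l : 'I_m.+1 | (i, l) \in A].
  have HZ : #|Z| <= n.
    apply: leq_trans HA.
    have inj : injective (fun l : 'I_m.+1 => (i, l)) by move=> x y [].
    rewrite -(card_imset Z inj); apply: subset_leq_card; apply/subsetP=> y /imsetP [x].
    by rewrite inE => Hx ->.
  have Hsub : [set: 'I_m.+1] \subset S :|: [set ord0] :|: Z.
    apply/subsetP=> l _; rewrite !inE.
    by case: (l =P ord0) => //= _; case: ((i, l) \in A); rewrite ?orbT.
  have H0 := subset_leq_card Hsub; rewrite cardsT card_ord in H0.
  have H1 := (leq_card_setU (S :|: [set ord0]) Z).1.
  have H2 := (leq_card_setU S [set ord0]).1; rewrite cards1 in H2.
  move: H0 H1 H2 HZ; move: #|S :|: _ :|: _| #|S :|: _| #|S| #|Z| => a b c d; rewrite Hm; lia.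
set ls := take L (enum S).
have Hsz : size ls = L by rewrite size_takel // -cardE.
have Hls : forall l, l \in ls -> (l != ord0) && ((i, l) \notin A).
  by move=> l /mem_take; rewrite mem_enum inE.
pose blk := fun l : 'I_m.+1 => [seq (posv a (i, l), a \in B) | a <- enum A].
have Hfst : forall l, map fst (blk l) = [seq posv a (i, l) | a <- enum A].
  by move=> l; rewrite -map_comp.
have := @card_blocks (vert k m * vert k m)%type _ n blk ls _ _ _.
rewrite Hsz => H.
apply: leq_trans (H _ _ _); last first.
- move=> l l' Hl Hl' Hne p; rewrite !Hfst => /mapP [a Ha ->].
  apply/mapP => -[a' Ha' /pos_eq [[_ Hv] | [Ha1 _]]].
    by move: Hne; case: Hv => ->; rewrite eqxx.
  by move: (Hls l' Hl'); rewrite -Ha1 -mem_enum Ha andbF.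
- move=> l Hl; split; last by rewrite size_map -cardE.
  rewrite Hfst map_inj_in_uniq ?enum_uniq // => a a' Ha Ha' /pos_eq [[] // | [Ha1 _]].
  by move: (Hls l Hl); rewrite -Ha1 -mem_enum Ha andbF.
- by rewrite take_uniq // enum_uniq.
rewrite leq_mul2l; apply/orP; right.
apply: subset_leq_card; apply/subsetP => w; rewrite !inE => Hw.
apply/allP => l Hl; apply: contra Hw => Hmatch; apply/existsP; exists l.
rewrite /okl Hls //=; apply/forall_inP => a Ha.
move/allP: Hmatch => /(_ (posv a (i, l), a \in B)); apply.
by apply: map_f; rewrite mem_enum.
Qed.

Lemma union_bound (T I : finType) (P : I -> pred T) (s : seq I) :
  #|[set w | has (fun x => P x w) s]| <= \sum_(x <- s) #|[set w | P x w]|.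
Proof.
elim: s => [|x s IH].
  rewrite big_nil leqn0 cards_eq0; apply/eqP/setP => w; by rewrite !inE.
rewrite big_cons /=.
apply: leq_trans (_ : #|[set w | P x w] :|: [set w | has (fun x => P x w) s]| <= _).
  by apply: subset_leq_card; apply/subsetP => w; rewrite !inE.
apply: leq_trans (leq_card_setU _ _).1 _; by rewrite leq_add2l.
Qed.

Lemma sum_bound (I : Type) (a : I -> nat) c b (s : seq I) :
  (forall x, c * a x <= b) -> c * \sum_(x <- s) a x <= size s * b.
Proof.
move=> H; elim: s => [|x s IH]; first by rewrite big_nil muln0.
by rewrite big_cons mulnDr /= mulSn leq_add.
Qed.

Definition badb k m n (x : 'I_k * {ffun 'I_n -> option (vert k m)} * {ffun 'I_n -> bool})
  (w : Omega k m) : bool :=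
  ~~ [exists l, okl w x.1.1 (Ag x.1.2) (Bg x.1.2 x.2) l].

Lemma exists_good n k : exists m, exists w : Omega k m,
  forall (i : 'I_k) (A B : {set vert k m}), #|A| <= n -> exists l, okl w i A B l.
Proof.
have [L HL] := arith (k * 2 ^ n) k (k * (n + 1) + 1) n (expn_gt0 2 n).
exists (n + L).
set m := n + L.
pose I : finType := ('I_k * {ffun 'I_n -> option (vert k m)} * {ffun 'I_n -> bool})%type.
case: (boolP [exists w : Omega k m, [forall x : I, ~~ badb x w]]) => [/existsP [w Hw] | Hno].
  exists w => i A B HA.
  have [g [h [HAg HBg]]] := Ag_surj B HA.
  have := forallP Hw (i, g, h); rewrite /badb negbK /= => /existsP [l Hl].
  exists l; move: Hl; rewrite /okl HAg => /andP [-> /forall_inP H3] /=.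
  by apply/forall_inP => a Ha; rewrite -HBg //; exact: H3.
exfalso.
have Hall : forall w : Omega k m, has (fun x => badb x w) (enum I).
  move: Hno; rewrite negb_exists => /forallP Hno w.
  have := Hno w; rewrite negb_forall => /existsP [x Hx].
  by apply/hasP; exists x; [rewrite mem_enum | rewrite negbK in Hx].
have U := union_bound (fun x w => badb x w) (enum I).
have Hset : [set w | has (fun x => badb x w) (enum I)] = [set: Omega k m].
  by apply/setP => w; rewrite !inE Hall.
rewrite Hset cardsT in U.
have Hx : forall x : I, (2 ^ n) ^ L * #|[set w | badb x w]| <= (2 ^ n - 1) ^ L * #|Omega k m|.
  by move=> [[i g] h]; apply: count_bad => //; exact: card_Ag.
have Hs := @sum_bound _ (fun x => #|[set w | badb x w]|) _ _ (enum I) Hx.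
rewrite -cardE in Hs.
have HI : #|I| = k * (k * L + (k * (n + 1) + 1)) ^ n * 2 ^ n.
  rewrite !card_prod !card_ffun card_option card_prod !card_ord card_bool.
  congr (_ * (_ ^ _) * _); rewrite /m; lia.
have HT : 0 < #|Omega k m| by apply/card_gt0P; exists [ffun => true].
have H1 : (2 ^ n) ^ L * #|Omega k m| <= #|I| * ((2 ^ n - 1) ^ L * #|Omega k m|).
  apply: leq_trans Hs; by rewrite leq_mul2l U orbT.
have H2 : #|I| * (2 ^ n - 1) ^ L * #|Omega k m| < (2 ^ n) ^ L * #|Omega k m|.
  rewrite ltn_pmul2r // HI.
  move: HL; move: (2 ^ n) ((k * L + (k * (n + 1) + 1)) ^ n) ((2 ^ n - 1) ^ L) ((2 ^ n) ^ L) => a b c d; by rewrite -(mulnA k b) (mulnC b a) mulnA.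
rewrite mulnA in H1.
move: H1 H2; move: (#|I| * (2 ^ n - 1) ^ L * #|Omega k m|) ((2 ^ n) ^ L * #|Omega k m|) => a b.
lia.
Qed.

Lemma sat_of_good n k (E0 : rel 'I_k) m (w : Omega k m) :
  weakly_saturated E0 n ->
  (forall i (A B : {set vert k m}), #|A| <= n -> exists l, okl w i A B l) ->
  event_sat E0 m n w.
Proof.
move=> Hws Hg; rewrite /event_sat /saturatedb.
apply/forallP => A; apply/implyP => HA; apply/forallP => f.
pose B := [set a in A | f a].
pose P := [set a.1 | a in B].
have HP : #|P| < n.
  apply: leq_ltn_trans HA; apply: leq_trans (leq_imset_card _ _) _.
  by apply: subset_leq_card; apply/subsetP=> a; rewrite /B inE => /andP [].
have [i Hi] := Hws P HP.
have [l /andP [/andP [Hl0 HlA] /forall_inP Hl]] := Hg i A B (ltnW HA).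
apply/existsP; exists (i, l); rewrite HlA /=; apply/forall_inP => a Ha.
rewrite /Hm_edge.
have Hne : (a == (i, l)) = false by apply/negbTE; apply: contraNneq HlA => <-.
rewrite Hne /=.
have Hpos : (if enum_rank a < enum_rank (i, l) then w (a, (i, l)) else w ((i, l), a))
   = w (posv a (i, l)) by rewrite /posv; case: ifP.
rewrite (negbTE Hl0) andbF Hpos (eqP (Hl a Ha)) /B inE Ha /=.
case Hfa: (f a).
- have -> : E0 a.1 i by apply: Hi; apply/imsetP; exists a => //; rewrite inE Ha Hfa.
  by [].
- by case: (E0 a.1 i).
Qed.

Lemma X_of_good n k (E0 : rel 'I_k) m (w : Omega k m) :
  (forall i (A B : {set vert k m}), #|A| <= n -> exists l, okl w i A B l) ->
  event_X E0 m n w.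
Proof.
move=> Hg; apply/forallP => p; apply/forallP => is_; apply/forallP => i; apply/forallP => js.
apply/implyP => /forallP HE.
pose A := [set (is_ q, js q) | q : 'I_p].
have HA : #|A| <= n.
  apply: leq_trans (leq_imset_card _ _) _; rewrite card_ord; exact: ltnW (ltn_ord p).
have [l /andP [/andP [Hl0 HlA] /forall_inP Hl]] := Hg i A A HA.
apply/existsP; exists l; apply/forallP => q.
have Hq : (is_ q, js q) \in A by apply/imsetP; exists q.
rewrite /Hm_edge.
have Hne : ((is_ q, js q) == (i, l)) = false by apply/negbTE; apply: contraNneq HlA => <-.
rewrite Hne /= HE (negbTE Hl0) andbF.
by have := Hl _ Hq; rewrite Hq /posv => /eqP; case: ifP.
Qed.

Unset Implicit Arguments.

Theorem lemma1 (n k : nat) (E0 : rel 'I_k) :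
  0 < k -> n <= k -> is_graph E0 -> weakly_saturated E0 n ->
  exists m : nat,
    (0 < prob (event_sat E0 m n))%R /\ (0 < prob (event_X E0 m n))%R.
Proof.
move=> k0 nk Hgr Hws.
have [m [w Hw]] := exists_good n k.
have Hd : (0 < #|{: Omega k m}|%:R :> rat)%R by rewrite ltr0n; apply/card_gt0P; exists w.
exists m; split; rewrite /prob; apply: divr_gt0 => //; rewrite ltr0n; apply/card_gt0P; exists w; rewrite inE.
- exact: sat_of_good.
- exact: X_of_good.
Qed.
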